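(* Let $q,h,K$ be complex numbers with $K(1+q)\neq1$, and set $K'=K\big(K(1+q)-1\big)^{-1}$. For any complex $L$ let $$\hat R(L;q,h)=\begin{pmatrix}1&0&0&Lh\\0&1-L&Lq&0\\0&L&1-Lq&0\\0&0&0&1-L(q+1)\end{pmatrix},\qquad R(L;q,h)=P\hat R(L;q,h).$$ Then $R(K';q,h)$ is invertible and $$P\,R(K;q,h)\,P=\big(R(K';q,h)\big)^{-1}.$$ In particular, for $K=2(1+q)^{-1}$ (assuming $q\neq-1$) one has $K'=K$ and $\hat R(K;q,h)^2=I_4$.
   Context: Matrices are written in the ordered basis $e_1\otimes e_1,e_1\otimes e_2,e_2\otimes e_1,e_2\otimes e_2$ of $\mathbb{C}^2\otimes\mathbb{C}^2$; $P$ is the flip matrix, i.e. the $4\times4$ permutation matrix swapping the second and third basis vectors. The matrix $PRP$ is what the paper denotes $(21)R$. *)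

(* Defs.v *)
From HB Require Import structures.
From mathcomp Require Import all_boot all_order all_algebra.
From mathcomp Require Import complex reals.
Set Implicit Arguments. Unset Strict Implicit. Unset Printing Implicit Defensive.
Import Order.TTheory GRing.Theory Num.Theory.
Local Open Scope ring_scope.

(* Basis order: e1⊗e1, e1⊗e2, e2⊗e1, e2⊗e2  <->  indices 0,1,2,3. *)

Definition flipP {F : nzRingType} : 'M[F]_4 :=
  \matrix_(i < 4, j < 4)
    (if ((i : nat), (j : nat)) is ((0, 0) | (1, 2) | (2, 1) | (3, 3))
     then 1 else 0).

Definition Rhat {F : nzRingType} (L q h : F) : 'M[F]_4 :=
  \matrix_(i < 4, j < 4)
    match (i : nat), (j : nat) with
    | 0, 0 => 1
    | 0, 3 => L * h
    | 1, 1 => 1 - L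
    | 1, 2 => L * q
    | 2, 1 => L
    | 2, 2 => 1 - L * q
    | 3, 3 => 1 - L * (q + 1)
    | _, _ => 0
    end.

Definition Rmat {F : nzRingType} (L q h : F) : 'M[F]_4 := flipP *m Rhat L q h.

Definition Kprime {F : fieldType} (K q : F) : F := K / (K * (1 + q) - 1).

(* Main.v *)
Require Import Defs.
From HB Require Import structures.
From mathcomp Require Import all_boot all_order all_algebra.
From mathcomp Require Import complex reals ring.
Import Order.TTheory GRing.Theory Num.Theory.
Local Open Scope ring_scope.

Lemma flipP2 (F : comNzRingType) : (flipP : 'M[F]_4) *m flipP = 1.
Proof.
apply/matrixP => i j; rewrite !mxE !big_ord_recr big_ord0 /= !mxE.
case: i => [[|[|[|[|i]]]] Hi] //; case: j => [[|[|[|[|j]]]] Hj] //=;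
 rewrite /= ?mxE /=; ring.
Qed.

Lemma Rhat_inv (F : fieldType) (K q h : F) : K * (1 + q) != 1 ->
  Rhat K q h *m Rhat (Kprime K q) q h = 1.
Proof.
move=> HK. have HD : K * (1 + q) - 1 != 0 by rewrite subr_eq0.
apply/matrixP => i j; rewrite !mxE !big_ord_recr big_ord0 /= !mxE /Kprime.
case: i => [[|[|[|[|i]]]] Hi] //; case: j => [[|[|[|[|j]]]] Hj] //=;
 rewrite /= ?mxE /=; try field.
all: by [].

Qed.

Theorem mainTheorem11 (R : realType) :
  (forall q h K : R[i], K * (1 + q) != 1 ->
     Rmat (Kprime K q) q h \in unitmx /\
     flipP *m Rmat K q h *m flipP = invmx (Rmat (Kprime K q) q h)) /\
  (forall q h : R[i], q != -1 ->
     let K := 2 / (1 + q) in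
     Kprime K q = K /\ Rhat K q h ^+ 2 = 1).
Proof.
split.
  move=> q h K HK.
  have E : (flipP *m Rmat K q h *m flipP) *m Rmat (Kprime K q) q h = 1.
    by rewrite /Rmat !mulmxA flipP2 mul1mx -(mulmxA _ flipP) flipP2 mulmx1 Rhat_inv.
  have U : Rmat (Kprime K q) q h \in unitmx.
    by case: (mulmx1_unit E).
  split => //.
  by rewrite -[LHS]mulmx1 -(mulmxV U) mulmxA E mul1mx.
move=> q h Hq K.
have Hq1 : 1 + q != 0 by apply: contraNneq Hq => H; rewrite -(addKr 1 q) H addr0.
have KP : Kprime K q = K.
  rewrite /Kprime /K. have -> : 2 / (1 + q) * (1 + q) - 1 = 1 by field.
  by rewrite divr1.
split => //.
rewrite expr2 -{2}KP; apply: Rhat_inv.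
rewrite /K divfK //; apply/eqP => /(congr1 (fun x : R[i] => x - 1)).
by rewrite subrr; apply/eqP; rewrite -addrA subrr addr0 oner_neq0.
Qed.
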